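(* Fix $y\in X$ and $f\in P_k$. Suppose there are polynomials $p_1,\dotsc,p_M$ of degree $k$ on $\mathbb{R}^{n(n-1)/2}$, each taking only the values $0$ or $1$ on $X$, and positive constants $b_k < c_k$ such that for every pair of distinct $i,j\in\{1,\dotsc,n\}$, \[ \sum_{x\in X:\ \{i,j\}\in x}\ \sum_{\ell=1}^{M} p_\ell(x) = \begin{cases} b_k & \text{if } \{i,j\}\notin y,\\ c_k & \text{if } \{i,j\}\in y.\end{cases} \] Then $-\frac{b_k(n-1)}{2(c_k-b_k)} \le f(y)$.
   Context: Let $N=n(n-1)/2$, coordinates of $\mathbb{R}^N$ indexed by unordered pairs $\{i,j\}$ of distinct elements of $\{1,\dotsc,n\}$. Let $X\subset\mathbb{R}^N$ be the set of incidence vectors of Hamiltonian cycles of $K_n$; for $x\in X$, ''$\{i,j\}\in x$'' means the cycle $x$ contains edge $\{i,j\}$. $P_k$ is the set of functions $f:X\to\mathbb{R}$ that are restrictions of linear functions on $\mathbb{R}^N$, have average value $1$ on $X$, and such that $q_f(h)=\frac{1}{|X|}\sum_{x\in X}f(x)h(x)^2\ge 0$ for every polynomial $h$ of degree at most $k$ on $\mathbb{R}^N$. *)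

(* Defs.v *)
From HB Require Import structures.
From mathcomp Require Import all_boot all_order all_fingroup all_algebra.
From mathcomp Require Import mpoly.
Set Implicit Arguments. Unset Strict Implicit. Unset Printing Implicit Defensive.
Import Order.TTheory GRing.Theory Num.Theory.
Local Open Scope ring_scope.

Definition edge (n : nat) := {A : {set 'I_n} | #|A| == 2%N}.

(* N = number of coordinates = #edges (= n(n-1)/2). *)
Definition nE (n : nat) : nat := #|{: edge n}|.

(* Hamiltonian cycles of K_n, as edge sets: the edges {s i, s (i+1 mod n)}
   of a cyclic ordering s of the vertices. *)
Definition ham_cycles (n : nat) : {set {set edge n}} :=
  [set C : {set edge n} | [exists s : perm_of (ordinal n),
     C == [set e : edge n | [exists i : 'I_n, val e == [set s i; s (ordS i)]]]]].

(* Incidence vector of an edge set, as a point of R^N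
   (coordinates indexed by edges via enum_val). *)
Definition inc (R : nzRingType) (n : nat) (C : {set edge n}) : 'I_(nE n) -> R :=
  fun i => if enum_val i \in C then 1 else 0.

Definition chi (R : nzRingType) (n : nat) (C : {set edge n}) (e : edge n) : R :=
  if e \in C then 1 else 0.

(* P_k : restrictions to X of linear functions, average 1 on X, and
   q_f(h) >= 0 for all polynomials h of degree <= k (msize h <= k+1). *)
Definition in_Pk (R : realFieldType) (n k : nat) (f : {set edge n} -> R) : Prop :=
  [/\ (exists a : edge n -> R, forall x, x \in ham_cycles n ->
          f x = \sum_(e : edge n) a e * chi R x e),
      (#|ham_cycles n|%:R)^-1 * \sum_(x in ham_cycles n) f x = 1
    & forall h : {mpoly R[nE n]}, (msize h <= k.+1)%N ->
        0 <= (#|ham_cycles n|%:R)^-1 *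
               \sum_(x in ham_cycles n) f x * (h.@[inc R x]) ^+ 2].

(* Main.v *)
Require Import Defs.
From HB Require Import structures.
From mathcomp Require Import all_boot all_order all_fingroup all_algebra.
From mathcomp Require Import mpoly.
From mathcomp Require Import zify ring lra.
Import Order.TTheory GRing.Theory Num.Theory.
Set Implicit Arguments. Unset Strict Implicit. Unset Printing Implicit Defensive.
Lemma emap_proof n (s : {perm 'I_n}) (e : edge n) : #|s @: val e| == 2.
Proof. by rewrite card_imset ?(valP e) //; exact: perm_inj. Qed.

Definition emap n (s : {perm 'I_n}) (e : edge n) : edge n :=
  exist (fun A : {set 'I_n} => #|A| == 2) _ (emap_proof s e).

Lemma imset_permK n (s : {perm 'I_n}) (A : {set 'I_n}) : s^-1%g @: (s @: A) = A.
Proof.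
rewrite -imset_comp (eq_imset _ (fun x => permK s x)) /=.
exact: imset_id.
Qed.

Lemma imset_permKV n (s : {perm 'I_n}) (A : {set 'I_n}) : s @: (s^-1%g @: A) = A.
Proof.
rewrite -imset_comp (eq_imset _ (fun x => permKV s x)) /=.
exact: imset_id.
Qed.

Lemma emapK n (s : {perm 'I_n}) e : emap s^-1%g (emap s e) = e.
Proof. by apply: val_inj; rewrite /= imset_permK. Qed.

Lemma emapKV n (s : {perm 'I_n}) e : emap s (emap s^-1%g e) = e.
Proof. by apply: val_inj; rewrite /= imset_permKV. Qed.

Definition cmap n (s : {perm 'I_n}) (x : {set edge n}) : {set edge n} :=
  [set e | emap s^-1%g e \in x].

Lemma cmap_inj n (s : {perm 'I_n}) : injective (cmap s).
Proof.
move=> x x' H; apply/setP => e.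
have := congr1 (fun z : {set edge n} => emap s e \in z) H.
by rewrite /cmap /= !inE emapK.
Qed.

Lemma imset2p n (s : {perm 'I_n}) (a b : 'I_n) : s @: [set a; b] = [set s a; s b].
Proof. by rewrite imsetU1 imset_set1. Qed.

Lemma cmap_ham n (s : {perm 'I_n}) x : x \in ham_cycles n -> cmap s x \in ham_cycles n.
Proof.
rewrite !inE => /existsP [t /eqP ->].
apply/existsP; exists (t * s)%g; apply/eqP/setP => e.
rewrite !inE; apply/existsP/existsP => [[i /eqP Hi]|[i /eqP Hi]]; exists i.
  rewrite !permM -imset2p -Hi /= imset_permKV //.
rewrite /= Hi !permM imset2p !permK //.
Qed.

Lemma cmap_mem n (s : {perm 'I_n}) x e : (emap s e \in cmap s x) = (e \in x).
Proof. by rewrite /cmap inE emapK. Qed.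

Definition Ncnt n (e : edge n) := #|[set x in ham_cycles n | e \in x]|.

Lemma Ncnt_le n s (e : edge n) : (Ncnt e <= Ncnt (emap s e))%N.
Proof.
rewrite /Ncnt -(card_imset _ (@cmap_inj n s)).
apply: subset_leq_card; apply/subsetP => z /imsetP [x]; rewrite inE => /andP [hx ex] ->.
by rewrite inE cmap_ham // cmap_mem.
Qed.

Lemma edge_trans n (e e' : edge n) : exists s : {perm 'I_n}, emap s e = e'.
Proof.
have := valP e; have := valP e'.
move=> /cards2P [u' [v' [nuv' He']]] /cards2P [u [v [nuv He]]].
exists (tperm u u' * tperm (tperm u u' v) v')%g.
apply: val_inj; rewrite /= He imset2p He' !permM (tpermL u u') tpermL.
rewrite (@tpermD _ (tperm u u' v) v' u') //.
  by have := nuv; rewrite -(inj_eq (@perm_inj _ (tperm u u'))) tpermL eq_sym.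
by rewrite eq_sym.
Qed.

Lemma Ncnt_const n (e e' : edge n) : Ncnt e = Ncnt e'.
Proof.
have [s <-] := edge_trans e e'; have [t Ht] := edge_trans (emap s e) e.
apply/eqP; rewrite eqn_leq Ncnt_le /=.
by have := Ncnt_le t (emap s e); rewrite Ht.
Qed.
Lemma ordS_val n (i : 'I_n) : val (ordS i) = if i.+1 == n then 0%N else i.+1.
Proof.
rewrite /=; case: eqP => [->|h]; first by rewrite modnn.
by rewrite modn_small //; have := ltn_ord i; lia.
Qed.

Lemma ordS_neq n (i : 'I_n) : (2 <= n)%N -> ordS i != i.
Proof.
move=> h; apply/eqP => /(congr1 val); rewrite ordS_val.
have := ltn_ord i; case: eqP => /= *; lia.
Qed.

Lemma ordSS_neq n (i : 'I_n) : (3 <= n)%N -> ordS (ordS i) != i.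
Proof.
move=> h; apply/eqP => /(congr1 val); rewrite !ordS_val.
have := ltn_ord i; case: (i.+1 =P n) => /= h1.
  rewrite (_ : 1 == n = false) /=; lia.
case: (i.+2 =P n) => /= *; lia.
Qed.

Lemma ham_card n (x : {set edge n}) : (3 <= n)%N -> x \in ham_cycles n -> #|x| = n.
Proof.
move=> hn; rewrite inE => /existsP [t /eqP ->].
have P i : #|[set t i; t (ordS i)]| == 2.
  by rewrite cards2 (inj_eq perm_inj) (eq_sym i) ordS_neq //; lia.
pose g i : edge n := exist (fun A : {set 'I_n} => #|A| == 2) _ (P i).
have -> : [set e : edge n | [exists i, val e == [set t i; t (ordS i)]]] = g @: setT.
  apply/setP => e; rewrite inE; apply/existsP/imsetP => [[i /eqP h]|[i _ ->]].
    by exists i => //; apply: val_inj.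
  by exists i.
rewrite card_imset ?cardsT ?card_ord //.
move=> i j /(congr1 val) /= h.
have hi : t i \in [set t j; t (ordS j)] by rewrite -h set21.
have hj : t j \in [set t i; t (ordS i)] by rewrite h set21.
move: hi hj; rewrite !inE !(inj_eq perm_inj).
case/orP => [/eqP //|/eqP hij]; case/orP => [/eqP //|/eqP hji].
by move: (ordSS_neq i hn); rewrite -hji -hij eqxx.
Qed.

Lemma card_edges n : (2 * nE n = n * n.-1)%N.
Proof.
rewrite /nE card_sig.
have -> : #|[pred x : {set 'I_n} | #|x| == 2]| = #|[set x : {set 'I_n} | #|x| == 2]|.
  by apply: eq_card => A; rewrite !inE.
rewrite card_draws card_ord.
elim: n => [//|n IH]; rewrite binS bin1 mulnDr IH /=; case: n {IH} => //= n; lia.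
Qed.
Local Open Scope ring_scope.
Lemma swap (R : realFieldType) n (a : edge n -> R) (w : {set edge n} -> R)
   (X : {set {set edge n}}) :
 \sum_(x in X) (\sum_e a e * chi R x e) * w x
   = \sum_e a e * \sum_(x in X | e \in x) w x.
Proof.
under eq_bigr do rewrite mulr_suml.
rewrite exchange_big /=; apply: eq_bigr => e _.
rewrite mulr_sumr big_mkcondr /=; apply: eq_bigr => x _.
by rewrite /chi; case: (e \in x); rewrite ?mulr1 ?mulr0 ?mul0r.
Qed.

Lemma dcount n : (\sum_(e : edge n) Ncnt e = \sum_(x in ham_cycles n) #|x|)%N.
Proof.
have h1 e : Ncnt e = (\sum_(x in ham_cycles n) (e \in x : nat))%N.
  rewrite /Ncnt -[#|_|]muln1 -sum_nat_const big_mkcond [RHS]big_mkcond /=; apply: eq_bigr => x _.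
  by rewrite inE; case: (x \in _); case: (e \in x).
have h2 (x : {set edge n}) : #|x| = (\sum_(e : edge n) (e \in x : nat))%N.
  by rewrite -[#|_|]muln1 -sum_nat_const big_mkcond.
rewrite (eq_bigr _ (fun e _ => h1 e)) [RHS](eq_bigr _ (fun x _ => h2 x)).
exact: exchange_big.
Qed.

Theorem lemma1 (R : realFieldType) (n k : nat) (y : {set edge n})
    (f : {set edge n} -> R) (ps : seq {mpoly R[nE n]}) (b c : R) :
  (3 <= n)%N ->
  y \in ham_cycles n ->
  in_Pk k f ->
  (forall p, p \in ps -> (msize p <= k.+1)%N) ->
  (forall p, p \in ps -> forall x, x \in ham_cycles n ->
     p.@[inc R x] = 0 \/ p.@[inc R x] = 1) ->
  0 < b -> b < c ->
  (forall e : edge n,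
     \sum_(x in ham_cycles n | e \in x) \sum_(p <- ps) p.@[inc R x]
       = if e \in y then c else b) ->
  - (b * (n%:R - 1)) / (2 * (c - b)) <= f y.
Proof.
move=> hn hy [[a ha] hav hq] hdeg h01 hb hbc hsum.
set X := ham_cycles n.
have Xpos : (0 < #|X|)%N by apply/card_gt0P; exists y.
have XposR : (0 : R) < #|X|%:R by rewrite ltr0n.
set S := \sum_e a e.
have pos : 0 <= \sum_(x in X) f x * \sum_(p <- ps) p.@[inc R x].
  under eq_bigr do rewrite mulr_sumr.
  rewrite exchange_big /= big_seq; apply: sumr_ge0 => p hp.
  have := hq p (hdeg p hp).
  rewrite pmulr_rge0 ?invr_gt0 //.
  congr (0 <= _); apply: eq_bigr => x hx.
  by case: (h01 p hp x hx) => ->; rewrite ?expr0n ?expr1n.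
have eqP1 : \sum_(x in X) f x * \sum_(p <- ps) p.@[inc R x] = b * S + (c - b) * f y.
  rewrite (eq_bigr (fun x => (\sum_e a e * chi R x e) * \sum_(p <- ps) p.@[inc R x])); last first.
    by move=> x hx; rewrite ha.
  rewrite swap (eq_bigr _ (fun e _ => congr1 (fun z => a e * z) (hsum e))) ha //.
  rewrite /S mulr_sumr mulr_sumr -big_split /=; apply: eq_bigr => e _.
  by rewrite /chi; case: (e \in y); ring.
have [e0 he0] : exists e0, e0 \in y.
  by apply/card_gt0P; rewrite ham_card //; lia.
set N := Ncnt e0.
have eqS : \sum_(x in X) f x = N%:R * S.
  rewrite (eq_bigr (fun x => (\sum_e a e * chi R x e) * 1)); last first.
    by move=> x hx; rewrite ha // mulr1.
  rewrite swap /S mulr_sumr; apply: eq_bigr => e _.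
  rewrite mulrC; congr (_ * _).
  rewrite (eq_bigl (fun x => x \in [set x in X | e \in x])) ?sumr_const.
    by rewrite /N -(Ncnt_const e e0).
  by move=> x; rewrite inE.
have hX : \sum_(x in X) f x = #|X|%:R.
  move: hav => /(congr1 (fun z => #|X|%:R * z)).
  by rewrite mulrA mulfV ?mul1r ?mulr1 // lt0r_neq0.
have nat1 : (N * nE n = n * #|X|)%N.
  have := dcount n.
  rewrite (eq_bigr _ (fun e _ => Ncnt_const e e0)) sum_nat_const.
  rewrite (eq_bigr (fun _ => n) (fun x hx => ham_card hn hx)) sum_nat_const => h.
  by rewrite /N /X [RHS]mulnC -h mulnC.
have nat2 : (N * n.-1 = 2 * #|X|)%N.
  apply/eqP; rewrite -(eqn_pmul2l (_ : 0 < n)%N); last by lia.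
  by rewrite mulnCA -card_edges mulnCA nat1 mulnCA.
have r2 : N%:R * (n%:R - 1) = 2 * #|X|%:R :> R.
  have -> : n%:R = (n.-1)%:R + 1 :> R by rewrite natr1 prednK //; lia.
  by rewrite addrK -[LHS]natrM nat2 natrM.
have e1 : N%:R * S = #|X|%:R by rewrite -eqS hX.
have hS : 2 * S = n%:R - 1.
  apply: (mulIf (lt0r_neq0 XposR)).
  rewrite -[in RHS]e1 (_ : (n%:R - 1) * (N%:R * S) = S * (N%:R * (n%:R - 1))); last by ring.
  by rewrite r2; ring.
have h := pos; rewrite eqP1 in h.
rewrite ler_pdivrMr; last by rewrite mulr_gt0 // subr_gt0.
rewrite -hS; nra.
Qed.
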